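(* Let $K\neq0$ and let $(\mathcal M,\rho)$ be a metric space such that $\operatorname{diam}(\mathcal M)\le\pi/(2\sqrt K)$ when $K>0$. If $(\mathcal M,\rho)$ satisfies the one-sided four point $\operatorname{cosq}_K$ condition, then every pair of points of $\mathcal M$ is joined by at most one shortest.
   Context: A shortest joining $P$ to $Q$ is a rectifiable curve from $P$ to $Q$ of length $\rho(P,Q)$ (curves identified up to reparametrization). Let $\kappa=\sqrt{|K|}$. For $A\neq P$, $B\neq Q$ (with $\rho(A,P),\rho(B,Q),\rho(A,B)<\pi/\sqrt K$ if $K>0$) put $x=\rho(A,P)$, $y=\rho(B,Q)$, $a=\rho(A,B)$, $b=\rho(P,Q)$, $d=\rho(P,B)$, $f=\rho(A,Q)$; for $K>0$ $$\operatorname{cosq}_K(\overrightarrow{AP},\overrightarrow{BQ})=\frac{\cos\kappa b+\cos\kappa x\cos\kappa y}{\sin\kappa x\sin\kappa y}-\frac{(\cos\kappa x+\cos\kappa d)(\cos\kappa y+\cos\kappa f)}{(1+\cos\kappa a)\sin\kappa x\sin\kappa y},$$ and for $K<0$ $$\operatorname{cosq}_K(\overrightarrow{AP},\overrightarrow{BQ})=\frac{(\cosh\kappa x+\cosh\kappa d)(\cosh\kappa y+\cosh\kappa f)}{(1+\cosh\kappa a)\sinh\kappa x\sinh\kappa y}-\frac{\cosh\kappa b+\cosh\kappa x\cosh\kappa y}{\sinh\kappa x\sinh\kappa y}.$$ Upper/lower four point $\operatorname{cosq}_K$ condition: $\operatorname{cosq}_K\le1$ / $\ge-1$ for all such quadruples;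 one-sided: at least one holds. *)

(* Defs.v *)
From Stdlib Require Import Reals Lra List.
Open Scope R_scope.

Record is_metric {X : Type} (rho : X -> X -> R) : Prop := {
  metric_eq0 : forall x y, rho x y = 0 <-> x = y;
  metric_sym : forall x y, rho x y = rho y x;
  metric_tri : forall x y z, rho x z <= rho x y + rho y z
}.

(* Curves are maps gamma : R -> X, considered on the parameter interval [0,1]. *)
Definition continuous_curve {X : Type} (rho : X -> X -> R) (gamma : R -> X) : Prop :=
  forall t, 0 <= t <= 1 -> forall eps, 0 < eps ->
    exists delta, 0 < delta /\
      forall s, 0 <= s <= 1 -> Rabs (s - t) < delta -> rho (gamma s) (gamma t) < eps.

Fixpoint ascending (t0 : R) (l : list R) : Prop :=
  match l with
  | nil => True
  | t :: l' => t0 <= t /\ ascending t l'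
  end.

Fixpoint chain_sum {X : Type} (rho : X -> X -> R) (gamma : R -> X) (t0 : R) (l : list R) : R :=
  match l with
  | nil => 0
  | t :: l' => rho (gamma t0) (gamma t) + chain_sum rho gamma t l'
  end.

Definition partition_sums {X : Type} (rho : X -> X -> R) (gamma : R -> X) (s : R) : Prop :=
  exists l : list R, ascending 0 (l ++ 1 :: nil) /\ s = chain_sum rho gamma 0 (l ++ 1 :: nil).

Definition curve_length {X : Type} (rho : X -> X -> R) (gamma : R -> X) (L : R) : Prop :=
  is_lub (partition_sums rho gamma) L.

Definition shortest {X : Type} (rho : X -> X -> R) (P Q : X) (gamma : R -> X) : Prop :=
  continuous_curve rho gamma /\ gamma 0 = P /\ gamma 1 = Q /\ curve_length rho gamma (rho P Q).

Definition reparam (phi : R -> R) : Prop :=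
  (forall t, 0 <= t <= 1 -> 0 <= phi t <= 1) /\
  (forall s t, 0 <= s <= 1 -> 0 <= t <= 1 -> s <= t -> phi s <= phi t) /\
  (forall t, 0 <= t <= 1 -> continuity_pt phi t) /\
  phi 0 = 0 /\ phi 1 = 1.

Definition same_up_to_reparam {X : Type} (g1 g2 : R -> X) : Prop :=
  exists phi1 phi2, reparam phi1 /\ reparam phi2 /\
    forall s, 0 <= s <= 1 -> g1 (phi1 s) = g2 (phi2 s).

Definition cosq (K : R) {X : Type} (rho : X -> X -> R) (A P B Q : X) : R :=
  let k := sqrt (Rabs K) in
  let x := rho A P in let y := rho B Q in let a := rho A B in
  let b := rho P Q in let d := rho P B in let f := rho A Q in
  if Rlt_dec 0 K then
    (cos (k*b) + cos (k*x) * cos (k*y)) / (sin (k*x) * sin (k*y))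
    - (cos (k*x) + cos (k*d)) * (cos (k*y) + cos (k*f))
      / ((1 + cos (k*a)) * sin (k*x) * sin (k*y))
  else
    (cosh (k*x) + cosh (k*d)) * (cosh (k*y) + cosh (k*f))
      / ((1 + cosh (k*a)) * sinh (k*x) * sinh (k*y))
    - (cosh (k*b) + cosh (k*x) * cosh (k*y)) / (sinh (k*x) * sinh (k*y)).

Definition cosq_admissible (K : R) {X : Type} (rho : X -> X -> R) (A P B Q : X) : Prop :=
  A <> P /\ B <> Q /\
  (0 < K -> rho A P < PI / sqrt K /\ rho B Q < PI / sqrt K /\ rho A B < PI / sqrt K).

Definition upper_cosq_condition (K : R) {X : Type} (rho : X -> X -> R) : Prop :=
  forall A P B Q, cosq_admissible K rho A P B Q -> cosq K rho A P B Q <= 1.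

Definition lower_cosq_condition (K : R) {X : Type} (rho : X -> X -> R) : Prop :=
  forall A P B Q, cosq_admissible K rho A P B Q -> -1 <= cosq K rho A P B Q.

Definition one_sided_cosq_condition (K : R) {X : Type} (rho : X -> X -> R) : Prop :=
  upper_cosq_condition K rho \/ lower_cosq_condition K rho.

(* Main.v *)
Require Import Defs.
From Stdlib Require Import Reals Lra List.
Open Scope R_scope.

Definition cq (K x y a b d f : R) : R :=
  let k := sqrt (Rabs K) in
  if Rlt_dec 0 K then
    (cos (k*b) + cos (k*x) * cos (k*y)) / (sin (k*x) * sin (k*y))
    - (cos (k*x) + cos (k*d)) * (cos (k*y) + cos (k*f))
      / ((1 + cos (k*a)) * sin (k*x) * sin (k*y))
  else
    (cosh (k*x) + cosh (k*d)) * (cosh (k*y) + cosh (k*f))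
      / ((1 + cosh (k*a)) * sinh (k*x) * sinh (k*y))
    - (cosh (k*b) + cosh (k*x) * cosh (k*y)) / (sinh (k*x) * sinh (k*y)).

Lemma cosq_cq K X (rho : X -> X -> R) A P B Q :
  cosq K rho A P B Q = cq K (rho A P) (rho B Q) (rho A B) (rho P Q) (rho P B) (rho A Q).
Proof. reflexivity. Qed.

Lemma cosh_plus x y : cosh (x+y) = cosh x * cosh y + sinh x * sinh y.
Proof. unfold cosh, sinh. rewrite Ropp_plus_distr, !exp_plus. field. Qed.

Lemma cosh_pos x : 0 < cosh x.
Proof. unfold cosh. pose proof (exp_pos x). pose proof (exp_pos (-x)). lra. Qed.

Lemma sinh_pos x : 0 < x -> 0 < sinh x.
Proof. intros. unfold sinh. pose proof (exp_increasing (-x) x). lra. Qed.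

Lemma cosh_gt1 x : 0 < x -> 1 < cosh x.
Proof.
  intros. unfold cosh.
  assert (e1 : exp x * exp (-x) = 1) by (rewrite <- exp_plus, Rplus_opp_r, exp_0; reflexivity).
  assert (e2 : 1 < exp x) by (rewrite <- exp_0; apply exp_increasing; lra).
  pose proof (exp_pos (-x)).
  nra.
Qed.

Lemma alg_up_pos C S Cy Sy Dd CL :
  0 < S -> 0 < Sy -> 0 < 1 + C -> Dd < 1 -> 0 < Cy + CL -> CL = C*Cy - S*Sy ->
  1 < (Cy + C*Cy)/(S*Sy) - (C+Dd)*(Cy+CL)/((1+C)*S*Sy).
Proof.
  intros hS hSy hC hD hCL ECL.
  assert (E : (Cy + C*Cy)/(S*Sy) - (C+Dd)*(Cy+CL)/((1+C)*S*Sy)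
     = 1 + (1-Dd)*(Cy+CL)/((1+C)*S*Sy)).
  { subst CL. field. repeat split; lra. }
  rewrite E.
  assert (0 < (1-Dd)*(Cy+CL)/((1+C)*S*Sy)).
  { apply Rdiv_lt_0_compat; [apply Rmult_lt_0_compat; lra|].
    repeat apply Rmult_lt_0_compat; lra. }
  lra.
Qed.

Lemma alg_up_neg C S Cy Sy Dd CL :
  0 < S -> 0 < Sy -> 0 < 1 + C -> 1 < Dd -> 0 < Cy + CL -> CL = C*Cy + S*Sy ->
  1 < (C + Dd) * (Cy + CL) / ((1 + C) * S * Sy) - (Cy + C * Cy) / (S * Sy).
Proof.
  intros hS hSy hC hD hCL ECL.
  assert (E : (C + Dd) * (Cy + CL) / ((1 + C) * S * Sy) - (Cy + C * Cy) / (S * Sy)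
     = 1 + (Dd-1)*(Cy+CL)/((1+C)*S*Sy)).
  { subst CL. field. repeat split; lra. }
  rewrite E.
  assert (0 < (Dd-1)*(Cy+CL)/((1+C)*S*Sy)).
  { apply Rdiv_lt_0_compat; [apply Rmult_lt_0_compat; lra|].
    repeat apply Rmult_lt_0_compat; lra. }
  lra.
Qed.

Lemma alg_lo_pos C S Cy Sy Dd CL :
  0 < S -> 0 < Sy -> 0 < C -> 0 < Cy -> 0 < 1 + Dd -> Dd < 1 -> CL = C*Cy - S*Sy ->
  (CL + C * Cy) / (S * Sy) - (C + C) * (Cy + Cy) / ((1 + Dd) * S * Sy) < -1.
Proof.
  intros hS hSy hC hCy hD1 hD ECL.
  assert (E : (CL + C * Cy) / (S * Sy) - (C + C) * (Cy + Cy) / ((1 + Dd) * S * Sy)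
     = -1 - 2*C*Cy*(1-Dd)/((1+Dd)*S*Sy)).
  { subst CL. field. repeat split; lra. }
  rewrite E.
  assert (0 < 2*C*Cy*(1-Dd)/((1+Dd)*S*Sy)).
  { apply Rdiv_lt_0_compat; [repeat apply Rmult_lt_0_compat; lra|].
    repeat apply Rmult_lt_0_compat; lra. }
  lra.
Qed.

Lemma alg_lo_neg C S Cy Sy Dd CL :
  0 < S -> 0 < Sy -> 0 < C -> 0 < Cy -> 1 < Dd -> CL = C*Cy + S*Sy ->
  (C + C) * (Cy + Cy) / ((1 + Dd) * S * Sy) - (CL + C * Cy) / (S * Sy) < -1.
Proof.
  intros hS hSy hC hCy hD ECL.
  assert (E : (C + C) * (Cy + Cy) / ((1 + Dd) * S * Sy) - (CL + C * Cy) / (S * Sy)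
     = -1 - 2*C*Cy*(Dd-1)/((1+Dd)*S*Sy)).
  { subst CL. field. repeat split; lra. }
  rewrite E.
  assert (0 < 2*C*Cy*(Dd-1)/((1+Dd)*S*Sy)).
  { apply Rdiv_lt_0_compat; [repeat apply Rmult_lt_0_compat; lra|].
    repeat apply Rmult_lt_0_compat; lra. }
  lra.
Qed.

Lemma pos_facts k s y d :
  0 < k -> 0 < s -> 0 < y -> 0 < d -> k*(s+y) <= PI/2 -> k*d <= PI/2 ->
  0 < sin (k*s) /\ 0 < sin (k*y) /\ 0 < cos (k*s) /\ 0 < cos (k*y) /\
  0 <= cos (k*d) /\ cos (k*d) < 1 /\ 0 <= cos (k*(s+y)) /\
  cos (k*(s+y)) = cos (k*s) * cos (k*y) - sin (k*s) * sin (k*y).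
Proof.
  intros hk hs hy hd h1 h2.
  pose proof PI_RGT_0.
  assert (0 < k*s) by (apply Rmult_lt_0_compat; lra).
  assert (0 < k*y) by (apply Rmult_lt_0_compat; lra).
  assert (0 < k*d) by (apply Rmult_lt_0_compat; lra).
  assert (k*(s+y) = k*s + k*y) by ring.
  repeat split.
  - apply sin_gt_0; lra.
  - apply sin_gt_0; lra.
  - apply cos_gt_0; lra.
  - apply cos_gt_0; lra.
  - apply cos_ge_0; lra.
  - rewrite <- cos_0. apply cos_decreasing_1; lra.
  - apply cos_ge_0; lra.
  - rewrite H3. apply cos_plus.
Qed.

Lemma neg_facts k s y d :
  0 < k -> 0 < s -> 0 < y -> 0 < d ->
  0 < sinh (k*s) /\ 0 < sinh (k*y) /\ 0 < cosh (k*s) /\ 0 < cosh (k*y) /\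
  1 < cosh (k*d) /\ 0 < cosh (k*(s+y)) /\
  cosh (k*(s+y)) = cosh (k*s) * cosh (k*y) + sinh (k*s) * sinh (k*y).
Proof.
  intros hk hs hy hd.
  assert (0 < k*s) by (apply Rmult_lt_0_compat; lra).
  assert (0 < k*y) by (apply Rmult_lt_0_compat; lra).
  assert (0 < k*d) by (apply Rmult_lt_0_compat; lra).
  assert (k*(s+y) = k*s + k*y) by ring.
  repeat split.
  - apply sinh_pos; lra.
  - apply sinh_pos; lra.
  - apply cosh_pos.
  - apply cosh_pos.
  - apply cosh_gt1; lra.
  - apply cosh_pos.
  - rewrite H2. apply cosh_plus.
Qed.

Lemma k_facts K : K <> 0 -> 0 < sqrt (Rabs K) /\ (0 < K -> sqrt (Rabs K) = sqrt K).
Proof.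
  intros. split.
  - apply sqrt_lt_R0, Rabs_pos_lt; auto.
  - intros. rewrite Rabs_pos_eq; lra.
Qed.

Lemma cq_upper K s y d :
  K <> 0 -> 0 < s -> 0 < y -> 0 < d ->
  (0 < K -> sqrt K * (s+y) <= PI/2 /\ sqrt K * d <= PI/2) ->
  1 < cq K s y s y d (s+y).
Proof.
  intros HK hs hy hd hb. destruct (k_facts K HK) as [hk hkK].
  unfold cq. cbv zeta. destruct (Rlt_dec 0 K) as [Kp|Kn].
  - rewrite (hkK Kp) in *. destruct (hb Kp) as [b1 b2].
    destruct (pos_facts (sqrt K) s y d) as (a1&a2&a3&a4&a5&a6&a7&a8); auto.
    apply alg_up_pos; lra.
  - destruct (neg_facts (sqrt (Rabs K)) s y d) as (a1&a2&a3&a4&a5&a6&a7); auto.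
    apply alg_up_neg; lra.
Qed.

Lemma cq_lower K s y d :
  K <> 0 -> 0 < s -> 0 < y -> 0 < d ->
  (0 < K -> sqrt K * (s+y) <= PI/2 /\ sqrt K * d <= PI/2) ->
  cq K s y d (s+y) s y < -1.
Proof.
  intros HK hs hy hd hb. destruct (k_facts K HK) as [hk hkK].
  unfold cq. cbv zeta. destruct (Rlt_dec 0 K) as [Kp|Kn].
  - rewrite (hkK Kp) in *. destruct (hb Kp) as [b1 b2].
    destruct (pos_facts (sqrt K) s y d) as (a1&a2&a3&a4&a5&a6&a7&a8); auto.
    apply alg_lo_pos; lra.
  - destruct (neg_facts (sqrt (Rabs K)) s y d) as (a1&a2&a3&a4&a5&a6&a7); auto.
    apply alg_lo_neg; lra.
Qed.

Lemma metric_nn {X} (rho : X -> X -> R) : is_metric rho -> forall u v, 0 <= rho u v.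
Proof.
  intros [Heq Hsym Htri] u v. pose proof (Htri u v u). rewrite (Hsym v u) in H.
  assert (rho u u = 0) by (apply Heq; reflexivity). lra.
Qed.

Lemma core K X (rho : X -> X -> R) P Q M1 M2 :
  K <> 0 -> is_metric rho ->
  (0 < K -> forall x y : X, rho x y <= PI / (2 * sqrt K)) ->
  one_sided_cosq_condition K rho ->
  rho P M1 + rho M1 Q = rho P Q ->
  rho P M2 + rho M2 Q = rho P Q ->
  rho P M1 = rho P M2 -> M1 = M2.
Proof.
  intros HK Hm Hd Hc H1 H2 H12.
  pose proof (metric_nn rho Hm) as Hnn.
  destruct Hm as [Heq Hsym Htri].
  apply Heq.
  destruct (Rle_lt_or_eq_dec 0 (rho M1 M2) (Hnn M1 M2)) as [hd|hd]; [exfalso|lra].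
  remember (rho P M1) as s eqn:Es.
  remember (rho M1 Q) as y eqn:Ey.
  remember (rho P Q) as L eqn:EL.
  remember (rho M1 M2) as d eqn:Ed.
  assert (E2 : rho M2 Q = y) by lra.
  assert (E3 : rho M1 P = s) by (rewrite Hsym; auto).
  assert (hs0 : 0 <= s) by (rewrite Es; apply Hnn).
  destruct (Rle_lt_or_eq_dec 0 s hs0) as [hs|hs].
  2:{ assert (P = M1) by (apply Heq; lra). assert (P = M2) by (apply Heq; lra).
      subst. assert (rho M2 M2 = 0) by (apply Heq; auto). lra. }
  assert (hy0 : 0 <= y) by (rewrite Ey; apply Hnn).
  destruct (Rle_lt_or_eq_dec 0 y hy0) as [hy|hy].
  2:{ assert (M1 = Q) by (apply Heq; lra). assert (M2 = Q) by (apply Heq; lra).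
      subst. assert (rho Q Q = 0) by (apply Heq; auto). lra. }
  assert (HL : L = s + y) by lra.
  assert (hb : 0 < K -> sqrt K * (s+y) <= PI/2 /\ sqrt K * d <= PI/2).
  { intros Kp. assert (0 < sqrt K) by (apply sqrt_lt_R0; auto).
    assert (e : sqrt K * (PI / (2 * sqrt K)) = PI/2) by (field; lra).
    split.
    - rewrite <- HL, EL. rewrite <- e. apply Rmult_le_compat_l; [lra|apply Hd; auto].
    - rewrite Ed. rewrite <- e. apply Rmult_le_compat_l; [lra|apply Hd; auto]. }
  assert (hlt : 0 < K -> forall x y : X, rho x y < PI / sqrt K).
  { intros Kp u v. assert (0 < sqrt K) by (apply sqrt_lt_R0; auto).
    pose proof PI_RGT_0.
    assert (PI / (2 * sqrt K) < PI / sqrt K).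
    { unfold Rdiv. apply Rmult_lt_compat_l; [lra|]. apply Rinv_lt_contravar; nra. }
    pose proof (Hd Kp u v). lra. }
  destruct Hc as [Hu|Hl].
  - assert (adm : cosq_admissible K rho P M1 M2 Q).
    { split; [|split].
      - intro e. subst M1. assert (rho P P = 0) by (apply Heq; auto). lra.
      - intro e. subst M2. assert (rho Q Q = 0) by (apply Heq; auto). lra.
      - intros Kp. split; [|split]; apply hlt; auto. }
    specialize (Hu _ _ _ _ adm). rewrite cosq_cq in Hu.
    rewrite <- Es, E2, <- H12, <- Ey, <- Ed, <- EL, HL in Hu.
    pose proof (cq_upper K s y d HK hs hy hd hb). lra.
  - assert (adm : cosq_admissible K rho M1 P M2 Q).
    { split; [|split].
      - intro e. subst M1. assert (rho P P = 0) by (apply Heq; auto). lra.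
      - intro e. subst M2. assert (rho Q Q = 0) by (apply Heq; auto). lra.
      - intros Kp. split; [|split]; apply hlt; auto. }
    specialize (Hl _ _ _ _ adm). rewrite cosq_cq in Hl.
    rewrite E3, E2, <- Ed, <- EL, HL, <- H12, <- Ey in Hl.
    pose proof (cq_lower K s y d HK hs hy hd hb). lra.
Qed.

Definition cont01 (f : R -> R) := forall t, 0 <= t <= 1 -> forall eps, 0 < eps ->
  exists delta, 0 < delta /\ forall s, 0 <= s <= 1 -> Rabs (s - t) < delta -> Rabs (f s - f t) < eps.
Definition mono01 (f : R -> R) := forall s t, 0 <= s <= 1 -> 0 <= t <= 1 -> s <= t -> f s <= f t.

Lemma lub_root (h : R -> R) a b (E : R -> Prop) m :
  a <= b ->
  (forall t, a <= t <= b -> forall eps, 0 < eps -> exists delta, 0 < delta /\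
     forall s, a <= s <= b -> Rabs (s - t) < delta -> Rabs (h s - h t) < eps) ->
  h a <= 0 -> 0 <= h b ->
  (forall t, E t <-> (a <= t <= b /\ h t <= 0)) ->
  is_lub E m -> a <= m <= b /\ h m = 0.
Proof.
  intros hab hc ha hb HE [Hub Hlub].
  assert (am : a <= m) by (apply Hub; apply HE; lra).
  assert (mb : m <= b). { apply Hlub. intros t Et. apply HE in Et. lra. }
  split; [lra|].
  apply Rle_antisym.
  - destruct (Rle_or_lt (h m) 0) as [H|H]; [exact H|exfalso].
    destruct (hc m (conj am mb) (h m) H) as [d [dpos Hd]].
    assert (m <= m - d) ; [|lra].
    apply Hlub. intros t Et. pose proof (Hub t Et) as tm.
    apply HE in Et. destruct Et as [[at1 tb] ht].
    destruct (Rle_or_lt t (m - d)) as [H1|H1]; [exact H1|exfalso].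
    assert (Rabs (t - m) < d) by (rewrite Rabs_left1; lra).
    specialize (Hd t (conj at1 tb) H0). apply Rabs_def2 in Hd. lra.
  - destruct (Rle_or_lt 0 (h m)) as [H|H]; [exact H|exfalso].
    destruct (Rle_lt_or_eq_dec m b mb) as [mb'|mb']; [|subst; lra].
    destruct (hc m (conj am mb) (- h m) ltac:(lra)) as [d [dpos Hd]].
    set (t := Rmin b (m + d/2)).
    assert (tb : t <= b) by apply Rmin_l.
    assert (tm : t <= m + d/2) by apply Rmin_r.
    assert (mt : m < t) by (unfold t; apply Rmin_glb_lt; lra).
    assert (Rabs (t - m) < d) by (rewrite Rabs_right; lra).
    specialize (Hd t ltac:(lra) H0). apply Rabs_def2 in Hd.
    assert (E t) by (apply HE; lra).
    pose proof (Hub t H1). lra.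
Qed.

Definition av (v : R) := if Rle_dec v 1 then 0 else v - 1.
Definition bv (v : R) := if Rle_dec v 1 then v else 1.

Lemma ab_facts v : 0 <= v <= 2 ->
  0 <= av v /\ v - 1 <= av v /\ av v <= bv v /\ bv v <= 1 /\ bv v <= v /\
  (av v = 0 \/ av v = v - 1) /\ (bv v = v \/ bv v = 1).
Proof. intros. unfold av, bv. destruct (Rle_dec v 1); lra. Qed.

Definition cl (u : R) := if Rle_dec u 0 then 0 else if Rle_dec u 1 then u else 1.

Lemma cl_range u : 0 <= cl u <= 1.
Proof. unfold cl. destruct (Rle_dec u 0); [lra|destruct (Rle_dec u 1); lra]. Qed.
Lemma cl_id u : 0 <= u <= 1 -> cl u = u.
Proof. intros. unfold cl. destruct (Rle_dec u 0); [lra|destruct (Rle_dec u 1); lra]. Qed.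
Lemma cl_lip u u' : Rabs (cl u - cl u') <= Rabs (u - u').
Proof.
  unfold cl. destruct (Rle_dec u 0); destruct (Rle_dec u' 0);
  try destruct (Rle_dec u 1); try destruct (Rle_dec u' 1); split_Rabs; lra.
Qed.

Lemma lip_cont (F : R -> R) c : 0 < c ->
  (forall u u', Rabs (F u - F u') <= c * Rabs (u - u')) -> forall x, continuity_pt F x.
Proof.
  intros hc HF x. unfold continuity_pt, continue_in, limit1_in, limit_in.
  intros eps Heps. exists (eps / c). split.
  - apply Rdiv_lt_0_compat; lra.
  - intros x0 [_ Hx]. simpl in *. unfold R_dist in *.
    eapply Rle_lt_trans; [apply HF|].
    replace eps with (c * (eps / c)) by (field; lra).
    apply Rmult_lt_compat_l; lra.
Qed.

Lemma reparam_match (f g : R -> R) (L : R) :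
  cont01 f -> cont01 g -> mono01 f -> mono01 g -> f 0 = 0 -> g 0 = 0 -> f 1 = L -> g 1 = L ->
  exists phi1 phi2, reparam phi1 /\ reparam phi2 /\
    forall u, 0 <= u <= 1 -> f (phi1 u) = g (phi2 u).
Proof.
  intros cf cg mf mg f0 g0 f1 g1.
  set (E := fun v t => av v <= t <= Rmax (av v) (bv v) /\ (t = av v \/ f t <= g (v - t))).
  assert (mlub : forall v, {m | is_lub (E v) m}).
  { intro v. apply completeness.
    - exists (Rmax (av v) (bv v)). intros t Et. apply Et.
    - exists (av v). split; [split; [lra|apply Rmax_l]|left; reflexivity]. }
  set (m := fun v => proj1_sig (mlub v)).
  assert (mP : forall v, is_lub (E v) (m v)) by (intro v; exact (proj2_sig (mlub v))).
  assert (key : forall v, 0 <= v <= 2 -> av v <= m v <= bv v /\ f (m v) = g (v - m v)).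
  { intros v hv. destruct (ab_facts v hv) as (h1&h2&h3&h4&h5&h6&h7).
    destruct (lub_root (fun t => f t - g (v - t)) (av v) (bv v) (E v) (m v)) as [r1 r2]; auto.
    - intros t ht eps heps.
      destruct (cf t ltac:(lra) (eps/2) ltac:(lra)) as [d1 [d1p Hd1]].
      destruct (cg (v - t) ltac:(lra) (eps/2) ltac:(lra)) as [d2 [d2p Hd2]].
      exists (Rmin d1 d2). split; [apply Rmin_glb_lt; lra|].
      intros s hs hst.
      assert (Rabs (s - t) < d1) by (eapply Rlt_le_trans; [exact hst|apply Rmin_l]).
      assert (Rabs ((v - s) - (v - t)) < d2).
      { replace ((v - s) - (v - t)) with (- (s - t)) by ring. rewrite Rabs_Ropp.
        eapply Rlt_le_trans; [exact hst|apply Rmin_r]. }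
      specialize (Hd1 s ltac:(lra) H). specialize (Hd2 (v - s) ltac:(lra) H0).
      apply Rabs_def2 in Hd1. apply Rabs_def2 in Hd2. apply Rabs_def1; lra.
    - destruct h6 as [e|e].
      + rewrite e, f0. assert (g 0 <= g (v - 0)) by (apply mg; lra). lra.
      + rewrite e. replace (v - (v - 1)) with 1 by ring. rewrite g1, <- f1.
        assert (f (v - 1) <= f 1) by (apply mf; lra). lra.
    - destruct h7 as [e|e].
      + rewrite e. replace (v - v) with 0 by ring. rewrite g0, <- f0.
        assert (f 0 <= f v) by (apply mf; lra). lra.
      + rewrite e, f1, <- g1. assert (g (v - 1) <= g 1) by (apply mg; lra). lra.
    - intros t. unfold E. rewrite Rmax_right by lra. split.
      + intros [ht [e|e]]; split; auto.
        subst t. destruct h6 as [e|e].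
        * rewrite e, f0. assert (g 0 <= g (v - 0)) by (apply mg; lra). lra.
        * rewrite e. replace (v - (v - 1)) with 1 by ring. rewrite g1, <- f1.
          assert (f (v - 1) <= f 1) by (apply mf; lra). lra.
        * lra.
      + intros [ht e]. split; auto. right. lra.
    - split; auto. lra. }
  assert (mono : forall v v', 0 <= v <= 2 -> 0 <= v' <= 2 -> v <= v' ->
             m v <= m v' /\ m v' - m v <= v' - v).
  { intros v v' hv hv' hvv.
    destruct (ab_facts v hv) as (h1&h2&h3&h4&h5&h6&h7).
    destruct (ab_facts v' hv') as (i1&i2&i3&i4&i5&i6&i7).
    destruct (key v hv) as [[k1 k2] k3]. destruct (key v' hv') as [[l1 l2] l3].
    split.
    - destruct (Rlt_or_le (m v) (av v')) as [H|H]; [lra|].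
      apply (proj1 (mP v')). unfold E. split.
      + split; [lra|]. rewrite Rmax_right by lra. destruct h7, i7; lra.
      + right. rewrite k3. apply mg; destruct h7, i7, i6; lra.
    - set (t := m v' - (v' - v)).
      destruct (Rle_or_lt t (av v)) as [H|H]; [unfold t in H; lra|].
      assert (E v t).
      { unfold E. split.
        - split; [lra|]. rewrite Rmax_right by lra. unfold t. destruct h7, i7; lra.
        - right. replace (v - t) with (v' - m v') by (unfold t; ring). rewrite <- l3.
          apply mf; unfold t in *; lra. }
      pose proof (proj1 (mP v) t H0). unfold t in H1. lra. }
  set (phi1 := fun u => m (2 * cl u)).
  set (phi2 := fun u => 2 * cl u - m (2 * cl u)).
  assert (lip : forall u u', Rabs (phi1 u - phi1 u') <= 2 * Rabs (u - u') /\
                              Rabs (phi2 u - phi2 u') <= 2 * Rabs (u - u')).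
  { intros u u'. pose proof (cl_range u). pose proof (cl_range u'). pose proof (cl_lip u u').
    unfold phi1, phi2.
    assert (Rabs (m (2 * cl u) - m (2 * cl u')) <= Rabs (2 * cl u - 2 * cl u') /\
            Rabs (2 * cl u - m (2 * cl u) - (2 * cl u' - m (2 * cl u')))
              <= Rabs (2 * cl u - 2 * cl u')).
    { destruct (Rle_or_lt (cl u) (cl u')).
      - destruct (mono (2 * cl u) (2 * cl u')) as [a1 a2]; try lra.
        split; split_Rabs; lra.
      - destruct (mono (2 * cl u') (2 * cl u)) as [a1 a2]; try lra.
        split; split_Rabs; lra. }
    replace (2 * cl u - 2 * cl u') with (2 * (cl u - cl u')) in H2 by ring.
    rewrite Rabs_mult, (Rabs_right 2) in H2 by lra. lra. }
  assert (k0 : m 0 = 0).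
  { destruct (key 0 ltac:(lra)) as [[a1 a2] _]. unfold av, bv in *.
    destruct (Rle_dec 0 1); lra. }
  assert (k2 : m 2 = 1).
  { destruct (key 2 ltac:(lra)) as [[a1 a2] _]. unfold av, bv in *.
    destruct (Rle_dec 2 1); lra. }
  exists phi1, phi2. split; [|split].
  - unfold reparam. split; [|split; [|split; [|split]]].
    + intros t ht. unfold phi1. rewrite cl_id by lra.
      destruct (key (2*t) ltac:(lra)) as [[a1 a2] _].
      destruct (ab_facts (2*t) ltac:(lra)) as (h1&h2&h3&h4&h5&h6&h7). lra.
    + intros s t hs ht hst. unfold phi1. rewrite !cl_id by lra. apply mono; lra.
    + intros t _. apply (lip_cont phi1 2); [lra|]. intros; apply lip.
    + unfold phi1. rewrite cl_id by lra. rewrite Rmult_0_r. exact k0.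
    + unfold phi1. rewrite cl_id by lra. rewrite Rmult_1_r. exact k2.
  - unfold reparam. split; [|split; [|split; [|split]]].
    + intros t ht. unfold phi2. rewrite cl_id by lra.
      destruct (key (2*t) ltac:(lra)) as [[a1 a2] _].
      destruct (ab_facts (2*t) ltac:(lra)) as (h1&h2&h3&h4&h5&h6&h7). lra.
    + intros s t hs ht hst. unfold phi2. rewrite !cl_id by lra.
      destruct (mono (2*s) (2*t)); lra.
    + intros t _. apply (lip_cont phi2 2); [lra|]. intros; apply lip.
    + unfold phi2. rewrite cl_id by lra. rewrite Rmult_0_r, k0. ring.
    + unfold phi2. rewrite cl_id by lra. rewrite Rmult_1_r, k2. ring.
  - intros u hu. unfold phi1, phi2. rewrite cl_id by lra.
    apply (key (2*u)). lra.
Qed.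

Lemma shortest_split {X} (rho : X -> X -> R) P Q g t :
  is_metric rho -> shortest rho P Q g -> 0 <= t <= 1 ->
  rho P (g t) + rho (g t) Q = rho P Q.
Proof.
  intros Hm [_ [H0 [H1 [Hub _]]]] ht.
  assert (rho P (g t) + rho (g t) Q <= rho P Q).
  { pose proof (Hub (chain_sum rho g 0 ((t :: nil) ++ 1 :: nil))) as Hc.
    simpl in Hc. rewrite H0, H1 in Hc. rewrite Rplus_0_r in Hc. apply Hc.
    exists (t :: nil). simpl. rewrite H0, H1. split; [lra|ring]. }
  pose proof (metric_tri rho Hm P (g t) Q). lra.
Qed.

Lemma shortest_mono {X} (rho : X -> X -> R) P Q g :
  is_metric rho -> shortest rho P Q g -> mono01 (fun t => rho P (g t)).
Proof.
  intros Hm Hs s t hs ht hst. pose proof Hs as Hs'.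
  destruct Hs' as [_ [H0 [H1 [Hub _]]]].
  assert (rho P (g s) + rho (g s) (g t) + rho (g t) Q <= rho P Q).
  { pose proof (Hub (chain_sum rho g 0 ((s :: t :: nil) ++ 1 :: nil))) as Hc.
    simpl in Hc. rewrite H0, H1 in Hc. rewrite Rplus_0_r in Hc.
    rewrite Rplus_assoc. apply Hc.
    exists (s :: t :: nil). simpl. rewrite H0, H1. split; [lra|ring]. }
  pose proof (shortest_split rho P Q g t Hm Hs ht).
  pose proof (metric_nn rho Hm (g s) (g t)). lra.
Qed.

Lemma shortest_cont {X} (rho : X -> X -> R) P Q g :
  is_metric rho -> shortest rho P Q g -> cont01 (fun t => rho P (g t)).
Proof.
  intros Hm [Hc _] t ht eps heps.
  destruct (Hc t ht eps heps) as [d [dp Hd]]. exists d. split; auto.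
  intros s hs hst. specialize (Hd s hs hst).
  pose proof (metric_tri rho Hm P (g t) (g s)).
  pose proof (metric_tri rho Hm P (g s) (g t)).
  pose proof (metric_sym rho Hm (g s) (g t)).
  apply Rabs_def1; lra.
Qed.

Theorem mainTheorem11 (K : R) (X : Type) (rho : X -> X -> R) :
  K <> 0 ->
  is_metric rho ->
  (0 < K -> forall x y : X, rho x y <= PI / (2 * sqrt K)) ->
  one_sided_cosq_condition K rho ->
  forall (P Q : X) (g1 g2 : R -> X),
    shortest rho P Q g1 -> shortest rho P Q g2 -> same_up_to_reparam g1 g2.
Proof.
  intros HK Hm Hd Hc P Q g1 g2 Hs1 Hs2.
  assert (e0 : forall g, shortest rho P Q g -> rho P (g 0) = 0).
  { intros g [_ [H0 _]]. rewrite H0. apply (metric_eq0 rho Hm). reflexivity. }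
  assert (e1 : forall g, shortest rho P Q g -> rho P (g 1) = rho P Q).
  { intros g [_ [_ [H1 _]]]. rewrite H1. reflexivity. }
  destruct (reparam_match (fun t => rho P (g1 t)) (fun t => rho P (g2 t)) (rho P Q))
    as [phi1 [phi2 [r1 [r2 Hm12]]]].
  - eapply shortest_cont; eauto.
  - eapply shortest_cont; eauto.
  - eapply shortest_mono; eauto.
  - eapply shortest_mono; eauto.
  - apply e0; auto.
  - apply e0; auto.
  - apply e1; auto.
  - apply e1; auto.
  - exists phi1, phi2. split; [auto|split; [auto|]].
    intros s hs.
    pose proof (proj1 r1 s hs). pose proof (proj1 r2 s hs).
    apply (core K X rho P Q); auto.
    + apply shortest_split; auto.
    + apply shortest_split; auto.
Qed.
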